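(* Let $V=\{0,\tfrac12,1\}$ and consider any sentential language with an atomic expressive semantics whose consequence relation is induced by the truth-relation $ss\cap tt$. Then no unary connective of the language (with any truth function) is a G-negation.
   Context: $ss\cap tt=\models_{\{1\},\{1\}}\cap\models_{\{1,\frac12\},\{1,\frac12\}}$, where $\gamma\models_{\mathcal{D}_p,\mathcal{D}_c}\delta$ iff ($\gamma\subseteq\mathcal{D}_p\Rightarrow\delta\cap\mathcal{D}_c\neq\emptyset$). A semantics: set of valuations mapping atoms to $V$, interpreting each connective by a truth function fixed across valuations, extended compositionally, such that every assignment of values to finitely many distinct atoms is realized. Atomic expressive: for every $\gamma\subseteq V$ there are a set of formulas $\Gamma$ and a valuation $v$ with $v(\Gamma)=\gamma$. Consequence: $\Gamma\vdash\Delta$ iff $v(\Gamma)\models v(\Delta)$ for all $v$; $\Gamma,A$ denotes $\Gamma\cup\{A\}$. A G-negation $\neg$ satisfies for all $\Gamma,\Delta,A$: $\Gamma,\neg A\vdash\Delta$ iff $\Gamma\vdash A,\Delta$; and $\Gamma\vdash\neg A,\Delta$ iff $\Gamma,A\vdash\Delta$. *)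

(* Defs.v *)
From Stdlib Require Import List Fin.
Set Implicit Arguments.

Inductive V3 : Type := v0 | vh | v1.

Definition vset := V3 -> Prop.

Definition models (Dp Dc : vset) (g d : vset) : Prop :=
  (forall x, g x -> Dp x) -> exists y, d y /\ Dc y.

Definition D1 : vset := fun x => x = v1.
Definition D2 : vset := fun x => x = v1 \/ x = vh.

Definition ss : vset -> vset -> Prop := models D1 D1.
Definition tt : vset -> vset -> Prop := models D2 D2.

Definition sstt (g d : vset) : Prop := ss g d /\ tt g d.

Inductive form (Atom : Type) (Conn : nat -> Type) : Type :=
| Var : Atom -> form Atom Conn
| App : forall n, Conn n -> (Fin.t n -> form Atom Conn) -> form Atom Conn.

Arguments Var {Atom Conn} _.
Arguments App {Atom Conn n} _ _.

Definition truth_funs (Conn : nat -> Type) := forall n, Conn n -> (Fin.t n -> V3) -> V3.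

Fixpoint eval (Atom : Type) (Conn : nat -> Type) (I : truth_funs Conn)
  (v : Atom -> V3) (A : form Atom Conn) : V3 :=
  match A with
  | Var p => v p
  | @App _ _ n c args => I n c (fun i => eval I v (args i))
  end.

(* A semantics: a set S of valuations (given by their atomic parts, extended
   compositionally with the fixed truth functions I) such that every
   assignment of values to finitely many distinct atoms is realized. *)
Definition is_semantics (Atom : Type) (S : (Atom -> V3) -> Prop) : Prop :=
  forall (l : list Atom) (f : Atom -> V3),
    exists v, S v /\ forall p, In p l -> v p = f p.

Definition img (Atom : Type) (Conn : nat -> Type) (I : truth_funs Conn)
  (v : Atom -> V3) (G : form Atom Conn -> Prop) : vset :=
  fun x => exists A, G A /\ eval I v A = x.

Definition atomic_expressive (Atom : Type) (Conn : nat -> Type)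
  (I : truth_funs Conn) (S : (Atom -> V3) -> Prop) : Prop :=
  forall g : vset, exists (G : form Atom Conn -> Prop) (v : Atom -> V3),
    S v /\ forall x, img I v G x <-> g x.

Definition cons (Atom : Type) (Conn : nat -> Type) (I : truth_funs Conn)
  (S : (Atom -> V3) -> Prop) (G D : form Atom Conn -> Prop) : Prop :=
  forall v, S v -> sstt (img I v G) (img I v D).

Definition addf (T : Type) (G : T -> Prop) (A : T) : T -> Prop :=
  fun B => G B \/ B = A.

Definition is_Gneg (Atom : Type) (Conn : nat -> Type) (I : truth_funs Conn)
  (S : (Atom -> V3) -> Prop) (neg : form Atom Conn -> form Atom Conn) : Prop :=
  forall (G D : form Atom Conn -> Prop) (A : form Atom Conn),
    (cons I S (addf G (neg A)) D <-> cons I S G (addf D A)) /\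
    (cons I S G (addf D (neg A)) <-> cons I S (addf G A) D).

Definition app1 (Atom : Type) (Conn : nat -> Type) (c : Conn 1)
  (A : form Atom Conn) : form Atom Conn := App c (fun _ => A).

(* Main.v *)
Require Import Defs.

Lemma refl_cons (Atom : Type) (Conn : nat -> Type) (I : truth_funs Conn)
  (S : (Atom -> V3) -> Prop) (G D : form Atom Conn -> Prop) B :
  G B -> D B -> cons I S G D.
Proof.
  intros HG HD v _. split.
  - intros H. exists (eval I v B). split. exists B; auto. apply H. exists B; auto.
  - intros H. exists (eval I v B). split. exists B; auto. apply H. exists B; auto.
Qed.

Theorem theorem4p3 (Atom : Type) (Conn : nat -> Type) (I : truth_funs Conn)
  (S : (Atom -> V3) -> Prop) :
  is_semantics S -> atomic_expressive I S ->
  forall c : Conn 1, ~ is_Gneg I S (app1 c).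
Proof.
  intros _ Hae c Hneg.
  destruct (Hae (fun x => x = vh)) as [G [v [Sv Himg]]].
  destruct (proj2 (Himg vh) eq_refl) as [A [_ HA]].
  assert (H1 : cons I S (fun _ => False) (addf (fun C => C = app1 c A) A)).
  { apply (proj1 (proj1 (Hneg (fun _ => False) (fun C => C = app1 c A) A))).
    apply refl_cons with (B := app1 c A); unfold addf; auto. }
  destruct (H1 v Sv) as [Hs _].
  assert (Hs' : exists y, img I v (addf (fun C => C = app1 c A) A) y /\ D1 y).
  { apply Hs. intros x [B [[] _]]. }
  destruct Hs' as [y [[B [HB HBy]] Hy]].
  unfold D1 in Hy; rewrite Hy in HBy; clear Hy.
  assert (Hf : eval I v (app1 c A) = v1).
  { destruct HB as [HB|HB]; subst B; auto. rewrite HA in HBy. discriminate. }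
  assert (H2 : cons I S (addf (fun C => C = A) (app1 c A)) (fun _ => False)).
  { apply (proj2 (proj1 (Hneg (fun C => C = A) (fun _ => False) A))).
    apply refl_cons with (B := A); unfold addf; auto. }
  destruct (H2 v Sv) as [_ Ht].
  assert (Ht' : exists y, img I v (fun _ : form Atom Conn => False) y /\ D2 y).
  { apply Ht. intros x [B0 [HB0 HBx]]. unfold D2. subst x.
    destruct HB0 as [HB0|HB0]; subst B0; auto. }
  destruct Ht' as [y2 [[B2 [[] _]] _]].
Qed.
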